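(* Let ${\cal X}$ be finite with $|{\cal X}|\ge 2$, $f\sim\mathcal{GP}(0,k)$ with $k$ positive semidefinite, and let $\zeta_t$ be a random variable, independent of $f$ and of ${\cal D}_{t-1}$, following the shifted exponential distribution with shift $s_t=2\log(|{\cal X}|/2)$ and rate $\lambda=1/2$. Let $\mathbf{x}^*=\arg\max_{\mathbf{x}\in{\cal X}}f(\mathbf{x})$. Then for every $t\ge1$ and any given ${\cal D}_{t-1}$, $$\mathbb{E}\bigl[f(\mathbf{x}^* )\mid{\cal D}_{t-1}\bigr]\le \mathbb{E}\Bigl[\max_{\mathbf{x}\in{\cal X}}\ \mu_{t-1}(\mathbf{x})+\zeta_t^{1/2}\sigma_{t-1}(\mathbf{x})\ \Big|\ {\cal D}_{t-1}\Bigr].$$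
   Context: Observation model: $y_i=f(\mathbf{x}_i)+\epsilon_i$ with $\epsilon_i\sim\mathcal N(0,\sigma^2)$ i.i.d., $\sigma^2>0$, independent of $f$; ${\cal D}_{t-1}=\{(\mathbf{x}_i,y_i)\}_{i=1}^{t-1}$; $\mu_{t-1},\sigma^2_{t-1}$ denote the GP posterior mean and variance of $f$ given ${\cal D}_{t-1}$ (standard GP regression formulas with noise variance $\sigma^2$). The shifted exponential distribution with shift $s$ and rate $\lambda$ is the law of $s+Z$ with $Z\sim\mathrm{Exp}(\lambda)$, i.e. density $\lambda e^{-\lambda(\zeta-s)}$ for $\zeta\ge s$ and $0$ otherwise. *)

(* Defs.v *)
From HB Require Import structures.
From mathcomp Require Import all_boot all_order all_algebra.
From mathcomp Require Import all_classical all_reals all_analysis.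
Set Implicit Arguments. Unset Strict Implicit. Unset Printing Implicit Defensive.
Import Order.TTheory GRing.Theory Num.Theory.
Import numFieldNormedType.Exports.
Local Open Scope classical_set_scope.
Local Open Scope ring_scope.

(* Maximum of a real function over a (nonempty) finite type:
   max_{x in X} g x.  (For an empty X it returns 0, a case never used.) *)
Definition fmax {R : realType} {X : finType} (g : X -> R) : R :=
  match enum X with
  | [::] => 0
  | x0 :: s => \big[Num.max/g x0]_(y <- s) g y
  end.

Definition psd_kernel {R : realType} {X : finType} (k : X -> X -> R) : Prop :=
  (forall x y, k x y = k y x) /\
  (forall a : X -> R, 0 <= \sum_x \sum_y a x * a y * k x y).

Section GPPosterior.
Context {R : realType} {X : finType} (k : X -> X -> R) (noise2 : R)
        (n : nat) (xs : 'I_n -> X) (ys : 'I_n -> R).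

Definition gp_Kreg : 'M[R]_n :=
  \matrix_(i, j) k (xs i) (xs j) + noise2 *: 1%:M.
Definition gp_kvec (x : X) : 'cV[R]_n := \col_i k (xs i) x.
Definition gp_yvec : 'cV[R]_n := \col_i ys i.

Definition gp_mean (x : X) : R :=
  ((gp_kvec x)^T *m invmx gp_Kreg *m gp_yvec) 0 0.
Definition gp_cov (x x' : X) : R :=
  k x x' - ((gp_kvec x)^T *m invmx gp_Kreg *m gp_kvec x') 0 0.
Definition gp_sd (x : X) : R := Num.sqrt (gp_cov x x).
End GPPosterior.

Definition gauss_law {R : realType} (m s : R) : set R -> \bar R :=
  if s == 0 then \d_m else normal_prob m s.

Section RandomVectors.
Context {d : measure_display} {Omega : measurableType d} {R : realType}
        (P : probability Omega R).

Definition gaussian_vector {X : finType} (F : Omega -> X -> R)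
    (m : X -> R) (C : X -> X -> R) : Prop :=
  (forall x, measurable_fun setT (fun w => F w x)) /\
  (forall (a : X -> R) (A : set R), measurable A ->
     P [set w | \sum_x a x * F w x \in A] =
     gauss_law (\sum_x a x * m x)
               (Num.sqrt (\sum_x \sum_y a x * a y * C x y)) A).

Definition shifted_exponential (Z : Omega -> R) (s lam : R) : Prop :=
  measurable_fun setT Z /\
  (forall A : set R, measurable A ->
     P [set w | Z w - s \in A] = exponential_prob lam A).
End RandomVectors.

(* Main.v *)
Require Import Defs.
From HB Require Import structures.
From mathcomp Require Import all_boot all_order all_algebra.
From mathcomp Require Import all_classical all_reals all_analysis.
Import Order.TTheory GRing.Theory Num.Theory.
Import numFieldNormedType.Exports.
Local Open Scope classical_set_scope.
Local Open Scope ring_scope.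
From mathcomp Require Import measurable_realfun ring lra.
Lemma big_max_ge {R : realType} {X : eqType} (g : X -> R) (x0 : X) (s : seq X) :
  g x0 <= \big[Num.max/g x0]_(y <- s) g y /\
  (forall y, y \in s -> g y <= \big[Num.max/g x0]_(y <- s) g y) /\
  exists2 z, z \in x0 :: s & \big[Num.max/g x0]_(y <- s) g y = g z.
Proof.
elim: s => [|a s [IH1 [IH2 [z zin IH3]]]].
  by rewrite big_nil; split => //; split => //; exists x0 => //; rewrite inE.
rewrite big_cons; split; [|split].
- by rewrite le_max IH1 orbT.
- move=> y; rewrite inE => /orP[/eqP->|ys]; first by rewrite le_max lexx.
  by rewrite le_max IH2 ?orbT.
- case: (leP (g a) (\big[Num.max/g x0]_(y <- s) g y)) => h.
  + exists z => //.
    by move: zin; rewrite !inE => /orP[->|->]; rewrite ?orbT.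
  + by exists a => //; rewrite !inE eqxx orbT.
Qed.

Lemma fmax_ge {R : realType} {X : finType} (g : X -> R) x : g x <= fmax g.
Proof.
rewrite /fmax; have : x \in enum X by rewrite mem_enum.
case: (enum X) => [//|x0 s]; rewrite inE => /orP[/eqP->|xs].
  by case: (big_max_ge g x0 s).
by case: (big_max_ge g x0 s) => _ [] /(_ _ xs).
Qed.

Lemma fmax_ex {R : realType} {X : finType} (g : X -> R) (x1 : X) :
  exists z, fmax g = g z.
Proof.
rewrite /fmax; have : x1 \in enum X by rewrite mem_enum.
case: (enum X) => [//|x0 s] _.
by case: (big_max_ge g x0 s) => _ [] _ [z _ ->]; exists z.
Qed.

Lemma fmax_gt {R : realType} {X : finType} (g : X -> R) (x1 : X) r :
  (r < fmax g) <-> exists x, r < g x.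
Proof.
split; first by case: (fmax_ex g x1) => z -> h; exists z.
by case=> x h; apply: (lt_le_trans h); apply: fmax_ge.
Qed.

Lemma fmax_le {R : realType} {X : finType} (g h : X -> R) (x1 : X) :
  (forall x, g x <= h x) -> fmax g <= fmax h.
Proof.
move=> gh; case: (fmax_ex g x1) => z ->; apply: le_trans (gh z) _.
exact: fmax_ge.
Qed.

Lemma measurable_fmax {d} {T : measurableType d} {R : realType} {X : finType}
  (F : T -> X -> R) : (forall x, measurable_fun setT (fun w => F w x)) ->
  measurable_fun setT (fun w => fmax (F w)).
Proof.
move=> mF; rewrite /fmax; case: (enum X) => [|x0 s]; first exact: measurable_cst.
elim: s => [|a s IH].
  by apply: (eq_measurable_fun (fun w => F w x0)) => // w _; rewrite big_nil.
apply: (eq_measurable_fun (fun w => Num.max (F w a)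
   (\big[Num.max/F w x0]_(y <- s) F w y))).
  by move=> w _; rewrite big_cons.
exact: measurable_realfun.measurable_maxr.
Qed.

Lemma tail_int_le d (T : measurableType d) (R : realType) (P : probability T R)
  (f g : T -> R) :
  measurable_fun setT f -> measurable_fun setT g ->
  (forall w, 0 <= f w) -> (forall w, 0 <= g w) ->
  (forall r, 0 <= r -> (P (f @^-1` `]r, +oo[) <= P (g @^-1` `]r, +oo[))%E) ->
  (\int[P]_w (f w)%:E <= \int[P]_w (g w)%:E)%E.
Proof.
move=> mf mg f0 g0 H.
have Pf : f \in mfun by rewrite inE.
have Pg : g \in mfun by rewrite inE.
pose Xf : {RV P >-> R} := mfun_Sub Pf.
pose Xg : {RV P >-> R} := mfun_Sub Pg.
have -> : (\int[P]_w (f w)%:E = 'E_P[Xf])%E.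
  by rewrite expectation_def /Xf mfun_valP.
have -> : (\int[P]_w (g w)%:E = 'E_P[Xg])%E.
  by rewrite expectation_def /Xg mfun_valP.
rewrite !ge0_expectation_ccdf; first last.
- by move=> w; rewrite /Xf mfun_valP.
- by move=> w; rewrite /Xg mfun_valP.
have mX1 := ccdf_measurable Xf.
have mX2 := ccdf_measurable Xg.
apply: ge0_le_integral => //.
- by apply: (measurable_funS _ _ mX1).
- by apply: (measurable_funS _ _ mX2).
move=> r /=; rewrite in_itv /= andbT => r0.
rewrite /ccdf /distribution /pushforward /Xf /Xg !mfun_valP.
exact: H.
Qed.

Lemma int_mono d (T : measurableType d) (R : realType)
  (mu : {measure set T -> \bar R}) (f g : T -> R) :
  measurable_fun setT f -> measurable_fun setT g -> (forall w, f w <= g w) ->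
  (\int[mu]_w (f w)%:E <= \int[mu]_w (g w)%:E)%E.
Proof.
move=> mf mg fg.
have mF : measurable_fun setT (EFin \o f : T -> \bar R) by apply/measurable_EFinP.
have mG : measurable_fun setT (EFin \o g : T -> \bar R) by apply/measurable_EFinP.
rewrite [X in (X <= _)%E]integralE [X in (_ <= X)%E]integralE.
apply: leeB; apply: ge0_le_integral => //=.
all: first [ exact: measurable_funepos | exact: measurable_funeneg
  | (by move=> x _; apply: funepos_ge0) | (by move=> x _; apply: funeneg_ge0) | idtac ].
- move=> x _; rewrite !funeposE /=.
  by rewrite ge_max !le_max lexx orbT andbT lee_fin fg.
- move=> x _; rewrite !funenegE /=.
  by rewrite ge_max !le_max lexx orbT andbT lee_fin lerN2 fg.
Qed.

Lemma bdd_below_noint d (T : measurableType d) (R : realType)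
  (P : probability T R) (h : T -> R) (b : R) :
  measurable_fun setT h -> (forall w, b <= h w) ->
  ~ P.-integrable setT (EFin \o h) ->
  (\int[P]_w (h w)%:E = +oo)%E.
Proof.
move=> mh hb nint.
have mH : measurable_fun setT (EFin \o h : T -> \bar R) by apply/measurable_EFinP.
have Hneg : (\int[P]_w ((EFin \o h)^\- w) <= (Num.max (- b) 0)%:E)%E.
  rewrite -[X in (_ <= X)%E]mule1 -(probability_setT P) -integral_cst //.
  apply: ge0_le_integral => //=.
  all: first [ exact: measurable_funeneg
    | (by move=> x _; apply: funeneg_ge0) | idtac ].
  move=> x _; rewrite funenegE /=.
  by rewrite ge_max !lee_fin !le_max lexx orbT andbT lerN2 hb.
have Hpos : (\int[P]_w ((EFin \o h)^\+ w) = +oo)%E.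
  apply/eqP; rewrite eq_le leey /=; apply/negPn/negP => hlt.
  apply: nint; apply/integrableP; split => //.
  rewrite (_ : (fun x => `|(EFin \o h) x|) = (fun x => ((EFin \o h)^\+ x + (EFin \o h)^\- x)))%E; last first.
    by apply/funext => x; have := congr1 (fun F => F x) (fune_abse (EFin \o h)).
  rewrite ge0_integralD //=.
  all: first [ exact: measurable_funepos | exact: measurable_funeneg
    | (by move=> x _; apply: funepos_ge0) | (by move=> x _; apply: funeneg_ge0) | idtac ].
  apply: lte_add_pinfty; first by rewrite ltNge.
  by apply: (le_lt_trans Hneg); rewrite ltry.
rewrite integralE Hpos.
have : (\int[P]_w ((EFin \o h)^\- w) \is a fin_num)%E.
  rewrite ge0_fin_numE; first by apply: (le_lt_trans Hneg); rewrite ltry.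
  by apply: integral_ge0 => x _; apply: funeneg_ge0.
by case: (\int[P]_w ((EFin \o h)^\- w))%E.
Qed.

Lemma int_ge0_fin d (T : measurableType d) (R : realType)
  (P : probability T R) (g : T -> R) :
  measurable_fun setT g -> (forall w, 0 <= g w) ->
  P.-integrable setT (EFin \o g) <-> (\int[P]_w (g w)%:E < +oo)%E.
Proof.
move=> mg g0.
have mG : measurable_fun setT (EFin \o g : T -> \bar R) by apply/measurable_EFinP.
have mA : measurable_fun setT (abse \o (EFin \o g) : T -> \bar R).
  exact: measurableT_comp.
split.
- move=> hi; have [_ hlt] := integrableP _ _ _ hi.
  apply: le_lt_trans hlt.
  apply: ge0_le_integral => //=.
  all: first [ (by move=> x _; rewrite lee_fin g0)
             | (by move=> x _; rewrite gee0_abs ?lee_fin ?g0)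
             | (by move=> x _; rewrite lee_fin ger0_norm ?g0)
             | (by move=> x _; rewrite lee_fin normr_ge0) | idtac ].
- move=> h; apply/integrableP; split => //.
  apply: le_lt_trans h.
  apply: ge0_le_integral => //=.
  all: first [ (by move=> x _; apply: abse_ge0)
             | (by move=> x _; rewrite gee0_abs ?lee_fin ?g0)
             | (by move=> x _; rewrite lee_fin ger0_norm ?g0)
             | (by move=> x _; rewrite lee_fin normr_ge0) | idtac ].
Qed.

Lemma shift_int_le d (T : measurableType d) (R : realType)
  (P : probability T R) (f g : T -> R) (c : R) :
  measurable_fun setT f -> measurable_fun setT g ->
  (forall w, 0 <= f w) -> (forall w, 0 <= g w) ->
  (\int[P]_w (f w)%:E <= \int[P]_w (g w)%:E)%E ->
  (\int[P]_w (f w + c)%:E <= \int[P]_w (g w + c)%:E)%E.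
Proof.
move=> mf mg f0 g0 fg.
have mgc : measurable_fun setT (fun w => g w + c).
  by apply: measurable_funD => //; exact: measurable_cst.
case: (pselect (P.-integrable setT (EFin \o g))) => ig.
- have ifP : P.-integrable setT (EFin \o f).
    apply/(@int_ge0_fin _ _ _ P f mf f0); apply: le_lt_trans fg _.
    by apply/(@int_ge0_fin _ _ _ P g mg g0).
  have ic : P.-integrable setT (EFin \o cst c).
    exact: finite_measure_integrable_cst.
  under eq_integral do rewrite EFinD.
  under [X in (_ <= X)%E]eq_integral do rewrite EFinD.
  rewrite integralD // integralD //.
  by rewrite leeD2r // ?fin_numE //.
- rewrite (@bdd_below_noint _ _ _ P (fun w => g w + c) c) ?leey //.
    by move=> w; rewrite lerDr g0.
  move=> igc; apply: ig.
  have : P.-integrable setT ((EFin \o (fun w => g w + c)) \+ (EFin \o cst (- c))).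
    by apply: integrableD => //; exact: finite_measure_integrable_cst.
  congr (P.-integrable _ _); apply/funext => w /=.
  by rewrite -EFinD addrK.
Qed.

Lemma affine_derive (R : realType) (k b : R) :
  (fun y : R => (y + b) * k)^`()%classic = cst k.
Proof.
apply/funext => x; rewrite derive1E deriveM // deriveD // derive_cst.
by rewrite derive_id derive_cst addr0 scaler0 add0r /GRing.scale /= mulr1.
Qed.

Lemma expo_ineq (R : realType) (s c x : R) : 0 < s -> 0 <= c -> 0 <= x ->
  - (x * (Num.sqrt 2 * s) + c * s) ^+ 2 / (s ^+ 2 *+ 2) <= - c ^+ 2 / 2 + - x ^+ 2.
Proof.
move=> s0 c0 x0.
set r := Num.sqrt 2.
have r2 : r ^+ 2 = 2 by rewrite sqr_sqrtr.
have r0 : 0 <= r by rewrite sqrtr_ge0.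
have -> : - (x * (r * s) + c * s) ^+ 2 / (s ^+ 2 *+ 2) = - (x * r + c) ^+ 2 / 2.
  by field; rewrite gt_eqF.
have t0 : 0 <= x * r * c by rewrite !mulr_ge0.
have -> : (x * r + c) ^+ 2 = 2 * x ^+ 2 + 2 * (x * r * c) + c ^+ 2.
  by rewrite sqrrD exprMn r2; ring.
lra.
Qed.

Lemma gauss_tail (R : realType) (m s c : R) : 0 < s -> 0 <= c ->
  (normal_prob m s `]((m + c * s)%R), +oo[ <= (2^-1 * expR (- (c ^+ 2) / 2))%:E)%E.
Proof.
move=> s0 c0.
set k := Num.sqrt 2 * s.
have k0 : 0 < k by rewrite mulr_gt0 // sqrtr_gt0.
pose F := fun y : R => (y + (m + c * s) / k) * k.
have F'E : F^`()%classic = cst k by exact: affine_derive.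
have sn0 : s != 0 by rewrite gt_eqF.
rewrite /normal_prob.
apply: (@le_trans _ _ (\int[lebesgue_measure]_(x in `[((m + c * s)%R), +oo[)
   (normal_pdf m s x)%:E)%E).
  apply: ge0_subset_integral => //=.
  - by apply/measurable_EFinP; exact: measurable_funTS (measurable_normal_pdf m s).
  - by move=> x _; rewrite lee_fin normal_pdf_ge0.
  - by apply: subset_itvr; rewrite bnd_simp.
have -> : m + c * s = F 0 by rewrite /F add0r divfK // gt_eqF.
rewrite increasing_ge0_integration_by_substitutiony //; first last.
- by move=> x _; apply: normal_pdf_ge0.
- by apply: continuous_subspaceT; exact: continuous_normal_pdf.
- by apply: gt0_cvgMly => //; exact: cvg_addrr.
- split; first by move=> x _; rewrite /F; exact: ex_derive.
  apply: cvg_at_right_filter; rewrite /F.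
  apply: cvgMl; apply: cvgD; [exact: cvg_id | exact: cvg_cst].
- by rewrite F'E; exact: is_cvg_cst.
- by rewrite F'E; exact: is_cvg_cst.
- by rewrite F'E => x _; exact: cst_continuous.
- by move=> x y _ _ xy; rewrite /F ltr_pM2r // ltrD2r.
rewrite F'E.
have mF : measurable_fun setT F.
  by apply: measurable_funM => //; apply: measurable_funD => //.
apply: (@le_trans _ _ (\int[lebesgue_measure]_(x in `[0%R, +oo[)
  ((normal_peak s * k * expR (- c ^+ 2 / 2))%:E * (gauss_fun x)%:E))%E).
  apply: ge0_le_integral => //=.
  - by move=> x _; rewrite lee_fin mulr_ge0 // ?normal_pdf_ge0 // ltW.
  - apply/measurable_EFinP.
    have mG : measurable_fun setT (fun x => normal_pdf m s (F x) * k).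
      apply: measurable_funM; last exact: measurable_cst.
      exact: measurableT_comp (measurable_normal_pdf m s) mF.
    exact: (measurable_funS _ _ mG).
  - have mG : measurable_fun setT (fun x => (normal_peak s * k * expR (- c ^+ 2 / 2))%:E * (gauss_fun x)%:E)%E.
      apply: measurable_funeM.
      by apply/measurable_EFinP; exact: measurable_gauss_fun.
    exact: (measurable_funS _ _ mG).
  move=> x; rewrite /= in_itv /= andbT => x0.
  rewrite -EFinM lee_fin normal_pdfE // /normal_fun /gauss_fun.
  change (normal_peak s * expR (- (F x - m) ^+ 2 / (s ^+ 2 *+ 2)) * k <=
    normal_peak s * k * expR (- c ^+ 2 / 2) * expR (- x ^+ 2)).
  have -> : F x - m = x * k + c * s.
    by rewrite /F mulrDl divfK ?gt_eqF //; ring.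
  rewrite mulrAC -!mulrA.
  apply: ler_wpM2l; first exact: normal_peak_ge0.
  apply: ler_wpM2l; first exact: sqrtr_ge0.
  apply: ler_wpM2l; first exact: ltW.
  rewrite -expRD ler_expR.
  by rewrite /k; apply: expo_ineq.
have mG : measurable_fun setT (fun x => (gauss_fun x)%:E : \bar R).
  by apply/measurable_EFinP; exact: measurable_gauss_fun.
rewrite ge0_integralZl //=.
all: first [ (by move=> x _; rewrite lee_fin gauss_fun_ge0)
  | (by rewrite lee_fin mulr_ge0 ?expR_ge0 // mulr_ge0 ?normal_peak_ge0 // ltW)
  | exact: (measurable_funS _ _ mG) | idtac ].
rewrite integral0y_gauss -EFinM lee_fin.
have -> : normal_peak s * k * expR (- c ^+ 2 / 2) * (Num.sqrt pi / 2) =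
  (normal_peak s * k * Num.sqrt pi) * (2^-1 * expR (- c ^+ 2 / 2)) by ring.
suff -> : normal_peak s * k * Num.sqrt pi = 1 by rewrite mul1r.
rewrite /normal_peak /k.
have -> : s ^+ 2 * pi *+ 2 = s ^+ 2 * (pi * 2) by rewrite -mulrnAr mulr_natr.
rewrite (sqrtrM (pi * 2) (sqr_ge0 s)) (sqrtrM 2 (pi_ge0 R)).
rewrite (sqrtr_sqr s) (ger0_norm (ltW s0)).
have p0 : Num.sqrt pi != 0 :> R by rewrite gt_eqF // sqrtr_gt0 pi_gt0.
have t0 : Num.sqrt 2 != 0 :> R by rewrite gt_eqF // sqrtr_gt0.
by field; rewrite ?sn0 ?p0 ?t0.
Qed.

Lemma exp_tail (R : realType) (r a : R) : 0 < r -> 0 <= a ->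
  (\int[lebesgue_measure]_(x in `[a, +oo[) (exponential_pdf r x)%:E =
   (expR (- r * a))%:E)%E.
Proof.
move=> r0 a0.
have cexpNM : continuous (fun z : R^o => expR (- r * z)).
  move=> z; apply: continuous_comp; last exact: continuous_expR.
  by apply: continuousM => //; apply: (@continuousN _ R^o); exact: cst_continuous.
rewrite (@ge0_continuous_FTC2y _ _ (fun x => - expR (- r * x)) a 0).
- by rewrite sub0e EFinN oppeK.
- by move=> x _; apply: exponential_pdf_ge0; exact: ltW.
- apply: (@continuous_subspaceW R^o _ _ [set` `[0, +oo[%R]).
  + by apply: subset_itvr; rewrite bnd_simp.
  + exact: within_continuous_exponential_pdf.
- rewrite -oppr0; apply: cvgN.
  rewrite (_ : (fun x => expR (- r * x)) =
               (fun z => expR (- z)) \o (fun z => r * z)); last first.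
    by apply: eq_fun => x; rewrite mulNr.
  apply: (@cvg_comp _ _ _ _ _ _ (pinfty_nbhs R)); last exact: cvgr_expR.
  exact: gt0_cvgMry.
- by move=> x _; exact: ex_derive.
- by apply: cvgN; apply/cvg_at_right_filter; exact: cexpNM.
- move=> x; rewrite in_itv /= andbT => ax.
  by apply: derive1_exponential_pdf; rewrite in_itv /= andbT (le_lt_trans a0).
Qed.

Lemma exp_tail_lb (R : realType) (r a : R) : 0 < r ->
  ((Num.min 1 (expR (- r * a)))%:E <= exponential_prob r `]a, +oo[)%E.
Proof.
move=> r0; rewrite /exponential_prob.
have mpdf : measurable_fun setT (fun x => (exponential_pdf r x)%:E : \bar R).
  by apply/measurable_EFinP; exact: measurable_exponential_pdf.
case: (leP 0 a) => a0.
- rewrite integral_itv_obnd_cbnd; last exact: (measurable_funS _ _ mpdf).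
  by rewrite exp_tail // lee_fin ge_min lexx orbT.
- apply: (@le_trans _ _ (\int[lebesgue_measure]_(x in `[0%R, +oo[)
      (exponential_pdf r x)%:E)%E).
    by rewrite exp_tail // ?lexx // mulr0 expR0 lee_fin ge_min lexx.
  apply: ge0_subset_integral => //=.
  - exact: (measurable_funS _ _ mpdf).
  - by move=> x _; rewrite lee_fin exponential_pdf_ge0 // ltW.
  - by apply: subset_itvr; rewrite bnd_simp.
Qed.

Lemma gauss_law_tail (R : realType) (m s c T : R) : 0 <= s -> 0 <= c ->
  m + c * s <= T ->
  (gauss_law m s `]T, +oo[ <= (2^-1 * expR (- (c ^+ 2) / 2))%:E)%E.
Proof.
move=> s0 c0 hT; rewrite /gauss_law.
case: eqP => [s00|/eqP sn0].
  rewrite diracE memNset ?lee_fin ?mulr_ge0 ?expR_ge0 //.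
  rewrite /= in_itv /= andbT => Tm; move: hT; rewrite s00 mulr0 addr0 => hT.
  by move: (lt_le_trans Tm hT); rewrite ltxx.
have sp : 0 < s by rewrite lt_def sn0 s0.
apply: le_trans (@gauss_tail R m s c sp c0).
apply: le_measure; rewrite ?inE //=.
by apply: subset_itvr; rewrite bnd_simp.
Qed.

Lemma sum_ind {R : realType} {X : finType} (x : X) (G : X -> R) :
  \sum_y (y == x)%:R * G y = G x.
Proof.
rewrite (bigD1 x) //= eqxx mul1r big1 ?addr0 // => y /negbTE ->.
by rewrite mul0r.
Qed.

Lemma marg {R : realType} {X : finType} {d} {Omega : measurableType d}
  (P : probability Omega R) (F : Omega -> X -> R) (m : X -> R)
  (C : X -> X -> R) : gaussian_vector P F m C ->
  forall x (A : set R), measurable A ->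
  P [set w | F w x \in A] = gauss_law (m x) (Num.sqrt (C x x)) A.
Proof.
move=> [_ HG] x A mA; have := HG (fun y => (y == x)%:R) A mA.
rewrite sum_ind.
have -> : \sum_x0 \sum_y (x0 == x)%:R * (y == x)%:R * C x0 y = C x x.
  rewrite (bigD1 x) //= [X in _ + X]big1 ?addr0; last first.
    by move=> y /negbTE ->; rewrite big1 // => z _; rewrite !mul0r.
  rewrite (bigD1 x) //= [X in _ + X]big1 ?addr0.
    by rewrite eqxx /= mulr1n !mul1r.
  by move=> y /negbTE ->; rewrite mulr0 mul0r.
move=> <-; congr (P _); apply/funext => w /=.
by rewrite sum_ind.
Qed.

Lemma meas_union_seq d (T : measurableType d) (R : realType)
  (P : probability T R) (I : Type) (E : I -> set T) (s : seq I) :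
  (forall i, measurable (E i)) ->
  measurable (\big[setU/set0]_(i <- s) E i) /\
  (P (\big[setU/set0]_(i <- s) E i) <= \sum_(i <- s) P (E i))%E.
Proof.
move=> mE; elim: s => [|a s [IH1 IH2]].
  by rewrite !big_nil measure0; split.
rewrite !big_cons; split; first exact: measurableU.
apply: le_trans (measureU2 _ _ _) _ => //.
by rewrite leeD2l.
Qed.

Lemma big_setU_mem {T : Type} {I : eqType} (E : I -> set T) (s : seq I) x w :
  x \in s -> E x w -> (\big[setU/set0]_(i <- s) E i) w.
Proof.
elim: s => [//|a s IH]; rewrite inE big_cons => /orP [/eqP -> h|xs h].
  by left.
by right; apply: IH.
Qed.

Lemma preE {d} {Omega : measurableType d} {R : realType} (f : Omega -> R)
  (A : set R) : [set w | f w \in A] = f @^-1` A.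
Proof. by apply/funext => w /=; rewrite in_setE. Qed.

Theorem lemma4p2
  (R : realType) (X : finType) (k : X -> X -> R) (noise2 : R)
  (t : nat) (xs : 'I_t.-1 -> X) (ys : 'I_t.-1 -> R)
  (d : measure_display) (Omega : measurableType d) (P : probability Omega R)
  (F : Omega -> X -> R) (zeta : Omega -> R) :
  (2 <= #|X|)%N ->
  psd_kernel k ->
  0 < noise2 ->
  (1 <= t)%N ->
  (* F is distributed as f | D_{t-1}: the GP posterior *)
  gaussian_vector P F (gp_mean k noise2 xs ys) (gp_cov k noise2 xs) ->
  (* zeta_t | D_{t-1} ~ shifted exponential, shift 2 log(|X|/2), rate 1/2 *)
  shifted_exponential P zeta (2 * ln (#|X|%:R / 2)) (2^-1) ->
  (\int[P]_w (fmax (F w))%:E <=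
   \int[P]_w (fmax (fun x => gp_mean k noise2 xs ys x
                     + Num.sqrt (zeta w) * gp_sd k noise2 xs x))%:E)%E.
Proof.
move=> HX _ _ _ HG HZ.
set mu := gp_mean k noise2 xs ys.
set C := gp_cov k noise2 xs.
set sd := gp_sd k noise2 xs.
have sdE : forall x, sd x = Num.sqrt (C x x) by [].
have sd0 : forall x, 0 <= sd x by move=> x; exact: sqrtr_ge0.
have [x1 _] : exists x1 : X, true.
  have : (0 < #|X|)%N by apply: leq_trans HX.
  by case/card_gt0P => x _; exists x.
have mF : forall x, measurable_fun setT (fun w => F w x) by case: HG.
have [mZ HZ'] := HZ.
set N : R := #|X|%:R.
have N2 : 2 <= N by rewrite /N (ler_nat R 2).
set s := 2 * ln (N / 2).
have s0 : 0 <= s.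
  by rewrite mulr_ge0 // ln_ge0 // ler_pdivlMr // mul1r.
set m1 := fmax mu.
set Y := fun w => fmax (F w).
set H := fun w => fmax (fun x => mu x + Num.sqrt (zeta w) * sd x).
have mY : measurable_fun setT Y by exact: measurable_fmax.
have msZ : measurable_fun setT (fun w => Num.sqrt (zeta w)).
  exact: measurableT_comp (continuous_measurable_fun (@sqrt_continuous R)) mZ.
have mH : measurable_fun setT H.
  apply: measurable_fmax => x; apply: measurable_funD; first exact: measurable_cst.
  by apply: measurable_funM => //; exact: measurable_cst.
have Hm1 : forall w, m1 <= H w.
  move=> w; apply: (fmax_le _ _ x1) => x.
  by rewrite lerDl mulr_ge0 // sqrtr_ge0.
have key : forall r, 0 <= r ->
    (P [set w | (m1 + r < Y w)%R] <= P [set w | (m1 + r < H w)%R])%E.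
  move=> r r0.
  set T := m1 + r.
  have Tmu : forall x, mu x <= T.
    by move=> x; apply: le_trans (fmax_ge mu x) _; rewrite lerDl.
  have mEx : forall x, measurable [set w | F w x \in `]T, +oo[%classic].
    move=> x.
    have -> : [set w | F w x \in `]T, +oo[%classic] = (fun w => F w x) @^-1` `]T, +oo[.
      by apply/funext => w /=; rewrite in_setE.
    rewrite -[X in measurable X]setTI.
    exact: (mF x) measurableT _ (measurable_itv _).
  have mYT : measurable [set w | (T < Y w)%R].
    have -> : [set w | (T < Y w)%R] = Y @^-1` `]T, +oo[.
      by apply/funext => w /=; rewrite in_itv /= andbT.
    by rewrite -[X in measurable X]setTI; exact: mY measurableT _ (measurable_itv _).
  have hY : (P [set w | (T < Y w)%R] <=
       \sum_(x <- enum X) P [set w | F w x \in `]T, +oo[%classic])%E.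
    have [mU leU] := @meas_union_seq _ _ _ P _ (fun x => [set w | F w x \in `]T, +oo[%classic]) (enum X) mEx.
    apply: le_trans leU.
    apply: le_measure; rewrite ?inE //.
    move=> w /= /(fmax_gt _ x1) [x hx].
    apply: (big_setU_mem _ (enum X) x); first by rewrite mem_enum.
    by rewrite /= in_setE /= in_itv /= andbT.
  have hmarg : forall x, P [set w | F w x \in `]T, +oo[%classic] =
                         gauss_law (mu x) (sd x) `]T, +oo[.
    by move=> x; rewrite (marg _ _ _ _ HG) // sdE.
  have hle1 : (P [set w | (T < Y w)%R] <= 1)%E by exact: probability_le1.
  case: (pselect (exists x, 0 < sd x)) => [[x0 hx0] | nS]; last first.
    apply: le_trans hY _.
    rewrite big1_seq; first exact: measure_ge0.
    move=> x _; rewrite hmarg.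
    have -> : sd x = 0.
      have := sd0 x; rewrite le_eqVlt => /orP [/eqP <- //|h].
      by exfalso; apply: nS; exists x.
    rewrite /gauss_law eqxx diracE memNset //= in_itv /= andbT.
    by move=> h; have := lt_le_trans h (Tmu x); rewrite ltxx.
  case: (@arg_minP _ _ _ x0 [pred i | 0 < sd i] (fun i => (T - mu i) / sd i) hx0) => xm hxm hmin.
  set c := (T - mu xm) / sd xm.
  have c0 : 0 <= c by rewrite divr_ge0 // subr_ge0.
  have cle : forall x, mu x + c * sd x <= T.
    move=> x; case: (ltP 0 (sd x)) => hx.
    - have h : c * sd x <= T - mu x by rewrite -ler_pdivlMr //; exact: hmin.
      lra.
    - have -> : sd x = 0 by apply/eqP; rewrite eq_le hx sd0.
      by rewrite mulr0 addr0.
  set e := expR (- c ^+ 2 / 2).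
  have hY2 : (P [set w | (T < Y w)%R] <= (N * (2^-1 * e))%:E)%E.
    apply: le_trans hY _.
    apply: (@le_trans _ _ (\sum_(x <- enum X) (2^-1 * e)%:E)%E).
      apply: lee_sum => x _; rewrite hmarg.
      exact: gauss_law_tail (sd0 x) c0 (cle x).
    by rewrite sumEFin big_enum /= sumr_const lee_fin /N mulr_natl.
  have hZ : (exponential_prob (2^-1 : R) `]((c ^+ 2 - s)%R), +oo[ <=
             P [set w | (T < H w)%R])%E.
    rewrite -HZ'; last exact: measurable_itv.
    apply: le_measure; rewrite ?inE //.
    - have -> : [set w | zeta w - s \in `](c ^+ 2 - s), +oo[%classic] =
          (fun w => zeta w - s) @^-1` `](c ^+ 2 - s), +oo[.
        by apply/funext => w /=; rewrite in_setE.
      rewrite -[X in measurable X]setTI.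
      apply: (measurable_funB mZ (measurable_cst s)) measurableT _ (measurable_itv _).
    - have -> : [set w | (T < H w)%R] = H @^-1` `]T, +oo[.
        by apply/funext => w /=; rewrite in_itv /= andbT.
      by rewrite -[X in measurable X]setTI; exact: mH measurableT _ (measurable_itv _).
    move=> w /=; rewrite in_setE /= in_itv /= andbT ltrD2r => hzw.
    have zpos : 0 < zeta w by apply: le_lt_trans hzw; exact: sqr_ge0.
    have hc : c < Num.sqrt (zeta w).
      by rewrite -(ger0_norm c0) -sqrtr_sqr ltr_sqrt.
    apply/(fmax_gt _ x1); exists xm.
    have -> : T = mu xm + c * sd xm by rewrite /c divfK ?gt_eqF //; ring.
    by rewrite ltrD2l ltr_pM2r.
  have hexp := @exp_tail_lb R (2^-1) (c ^+ 2 - s) (ltac:(by rewrite invr_gt0)).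
  have eE : expR (- 2^-1 * (c ^+ 2 - s)) = N * (2^-1 * e).
    rewrite (_ : - 2^-1 * (c ^+ 2 - s) = - c ^+ 2 / 2 + ln (N / 2)).
      rewrite expRD lnK; first by rewrite /e; field.
      by rewrite posrE divr_gt0 // (lt_le_trans _ N2).
    by rewrite /s; field.
  apply: le_trans (le_trans hexp hZ).
  by rewrite eE EFin_min le_min hle1 hY2.
apply: (@le_trans _ _ (\int[P]_w (Num.max (Y w) m1)%:E)%E).
  apply: int_mono => //.
    by apply: measurable_maxr => //; exact: measurable_cst.
  by move=> w; rewrite le_max lexx.
have e1 : (fun w => (Num.max (Y w) m1)%:E) =
          (fun w => ((Num.max (Y w) m1 - m1) + m1)%:E).
  by apply/funext => w; rewrite subrK.
have e2 : (fun w => (H w)%:E) = (fun w => ((H w - m1) + m1)%:E).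
  by apply/funext => w; rewrite subrK.
change (\int[P]_w (Num.max (Y w) m1)%:E <= \int[P]_w (H w)%:E)%E.
rewrite e1 e2.
have mf : measurable_fun setT (fun w => Num.max (Y w) m1 - m1).
  apply: measurable_funB; last exact: measurable_cst.
  by apply: measurable_maxr => //; exact: measurable_cst.
have mg : measurable_fun setT (fun w => H w - m1).
  by apply: measurable_funB => //; exact: measurable_cst.
apply: shift_int_le => //.
- by move=> w; rewrite subr_ge0 le_max lexx orbT.
- by move=> w; rewrite subr_ge0.
apply: tail_int_le => //.
- by move=> w; rewrite subr_ge0 le_max lexx orbT.
- by move=> w; rewrite subr_ge0.
move=> r r0.
have -> : (fun w => Num.max (Y w) m1 - m1) @^-1` `]r, +oo[ =
          [set w | (m1 + r < Y w)%R].
  apply/funext => w /=; apply/propext; rewrite in_itv /= andbT ltrBrDl.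
  rewrite lt_max; split; [case/orP => // | by move=> ->].
  by rewrite ltNge lerDl r0.
have -> : (fun w => H w - m1) @^-1` `]r, +oo[ = [set w | (m1 + r < H w)%R].
  by apply/funext => w /=; apply/propext; rewrite in_itv /= andbT ltrBrDl.
exact: key r0.
Qed.
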